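(* Let $q\in(0,1]$. Then $\mathrm{Kaz}(\rho,R(SU_q(2)))=1-\frac{2}{[2]_q}=\frac{(1-q)^2}{q^2+1}$.
   Context: $R(SU_q(2))$ is the fusion algebra with irreducible objects $I=\mathbb{Z}_+$, unit $0$, trivial involution, product $m\cdot n=\sum_{k\in\{|m-n|,|m-n|+2,\dots,m+n\}}k=\sum_k N^k_{m,n}k$, and dimension $d(n)=[n+1]_q$, where $[x]_q=\frac{q^{-x}-q^x}{q^{-1}-q}$ for $0<q<1$ and $[x]_1=x$. Let $\mathcal{C}_R=\mathbb{C}[I]$ be its complexification (a unital $*$-algebra). The right regular representation $\rho:\mathcal{C}_R\to B(\ell^2(I))$ is given by $\rho(m)\delta_n=\sum_{k\in I}N^k_{n,\bar m}\delta_k$. A finite generating set is a finite $X\subseteq I$ such that every element of $I$ appears with nonzero coefficient in some product of elements of $X$. For a unital $*$-representation $\pi$ on $H_\pi$ and a finite generating set $X$, $\mathrm{Kaz}(X,\pi,R)=\inf_{\xi\in H_\pi,\|\xi\|=1}\max_{m\in X}\frac{\|\pi(m)\xi-d(m)\xi\|}{d(m)}$, and $\mathrm{Kaz}(\pi,R)=\inf_X\mathrm{Kaz}(X,\pi,R)$ over all finite generating sets $X$. *)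

(* Defs.v *)
From HB Require Import structures.
From mathcomp Require Import all_boot all_order all_algebra.
From mathcomp Require Import all_classical all_reals all_analysis.
Set Implicit Arguments. Unset Strict Implicit. Unset Printing Implicit Defensive.
Import Order.TTheory GRing.Theory Num.Theory.
Local Open Scope classical_set_scope.
Local Open Scope ring_scope.

(* Irreducible objects I = nat; unit 0; trivial involution (conj m = m). *)

Definition Nfus (k m n : nat) : nat :=
  [&& (`|m%:Z - n%:Z|%N <= k)%N, (k <= m + n)%N & ~~ odd (k + m + n)].

(* coefficient of k in the product m_1 . m_2 . ... . m_r (empty product = unit 0).
   The product m . y has k-coefficient sum_j N^k_{m,j} y_j, and N^k_{m,j} = 0
   unless j <= k + m, so the sum is finite. *)
Fixpoint prodcoef (w : seq nat) (k : nat) : nat :=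
  match w with
  | [::] => (k == 0)%N
  | m :: w' => \sum_(j < (k + m).+1) Nfus k m j * prodcoef w' j
  end.

Definition fin_gen_set (X : seq nat) : Prop :=
  forall k : nat, exists w : seq nat, all (fun m => m \in X) w /\ prodcoef w k != 0%N.

Definition qint {R : realType} (q : R) (x : nat) : R :=
  if q == 1 then x%:R else (q ^- x - q ^+ x) / (q^-1 - q).

Definition qdim {R : realType} (q : R) (n : nat) : R := qint q n.+1.

(* A complex-valued vector on I is encoded by its real and imaginary parts. *)
Definition cvec (R : realType) := nat -> R * R.

Definition modsq {R : realType} (z : R * R) : R := z.1 ^+ 2 + z.2 ^+ 2.

Definition normsq {R : realType} (xi : cvec R) : \bar R :=
  (\sum_(0 <= k <oo) (modsq (xi k))%:E)%E.

Definition l2 {R : realType} (xi : cvec R) : Prop := (normsq xi < +oo)%E.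

Definition l2norm {R : realType} (xi : cvec R) : \bar R :=
  if pselect (l2 xi) is left _ then (Num.sqrt (fine (normsq xi)))%:E else +oo%E.

(* Right regular representation: rho(m) delta_n = sum_k N^k_{n, conj m} delta_k,
   with conj m = m.  On a general vector, (rho(m) xi)_k = sum_n N^k_{n,m} xi_n,
   a finite sum since N^k_{n,m} = 0 unless n <= k + m. *)
Definition rho {R : realType} (m : nat) (xi : cvec R) : cvec R :=
  fun k => (\sum_(n < (k + m).+1) (Nfus k n m)%:R * (xi n).1,
            \sum_(n < (k + m).+1) (Nfus k n m)%:R * (xi n).2).

Definition subscal {R : realType} (v xi : cvec R) (c : R) : cvec R :=
  fun k => ((v k).1 - c * (xi k).1, (v k).2 - c * (xi k).2).

Definition kaz_val {R : realType} (q : R) (X : seq nat) (xi : cvec R) : \bar R :=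
  (\big[maxe/0%E]_(m <- X)
     (l2norm (subscal (rho m xi) xi (qdim q m)) * ((qdim q m)^-1)%:E))%E.

Definition KazX {R : realType} (q : R) (X : seq nat) : \bar R :=
  ereal_inf [set kaz_val q X xi | xi in [set xi : cvec R | normsq xi = 1%E]].

Definition Kaz_rho {R : realType} (q : R) : \bar R :=
  ereal_inf [set KazX q X | X in [set X : seq nat | fin_gen_set X]].

(* Main.v *)
Set Warnings "-all".
Require Import Defs.
From HB Require Import structures.
From mathcomp Require Import all_boot all_order all_algebra.
From mathcomp Require Import all_classical all_reals all_analysis.
From mathcomp Require Import zify ring lra.
Import Order.TTheory GRing.Theory Num.Theory.
Set Implicit Arguments. Unset Strict Implicit. Unset Printing Implicit Defensive.
Local Open Scope ring_scope.
Section Q.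
Variable R : realType.
Variable q : R.
Hypothesis hq0 : 0 < q.
Hypothesis hq1 : q <= 1.

Lemma qint0 : qint q 0 = 0.
Proof. rewrite /qint; case: ifP => _; first by []. by rewrite expr0 invr1 subrr mul0r. Qed.

Lemma qint1 : qint q 1 = 1.
Proof.
rewrite /qint; case: ifP => [_|/eqP h]; first by [].
rewrite expr1 divff // subr_eq0; apply/eqP => e.
have : q * q = 1 by rewrite -{1}e mulVf // gt_eqF.
move=> hh; clear e; apply: h; apply/eqP; rewrite eq_le hq1 /=; have : q * q <= q * 1 by rewrite ler_pM2l. by rewrite hh mulr1.
Qed.

Lemma qintSS n : qint q n.+2 = qint q n + ((q ^+ n.+1)^-1 + q ^+ n.+1).
Proof.
rewrite /qint; case: ifP => [/eqP->|/eqP h].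
  rewrite !expr1n invr1 -addn2 natrD. by [].
have qn0 : q != 0 by rewrite gt_eqF.
have d0 : q^-1 - q != 0.
  rewrite subr_eq0; apply/eqP => e.
  have hh : q * q = 1 by rewrite -{1}e mulVf.
  clear e; apply: h; apply/eqP; rewrite eq_le hq1 /=; have : q * q <= q * 1 by rewrite ler_pM2l. by rewrite hh mulr1.
have an0 : q ^+ n != 0 by rewrite expf_neq0.
have d1 : 1 + - q * q != 0.
  apply/eqP => e; apply: h; apply/eqP; rewrite eq_le hq1 /=.
  have : q * q <= q * 1 by rewrite ler_pM2l.
  have -> : q * q = 1 by lra.
  by rewrite mulr1.
rewrite !exprS; field.
by rewrite an0 qn0 d1.
Qed.

Lemma qint2 : qint q 2 = q^-1 + q.
Proof. by rewrite qintSS qint0 add0r expr1. Qed.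

Lemma a_ge j : (1 <= j)%N -> q^-1 + q <= (q ^+ j)^-1 + q ^+ j.
Proof.
move=> hj.
have bq : q ^+ j <= q.
  by rewrite -{2}(expr1 q); apply: ler_wiXn2l => //; rewrite ltW.
have b0 : 0 < q ^+ j by rewrite exprn_gt0.
have hb1 : q ^+ j * q <= 1.
  apply: (@le_trans _ _ (q ^+ j * 1)); first by rewrite ler_pM2l.
  by rewrite mulr1; apply: le_trans bq hq1.
set b := q ^+ j in bq b0 hb1 *.
have e1 : (b^-1 - q^-1) = (q - b) / (b * q) by field; rewrite !gt_eqF.
have : 0 <= (q - b) / (b * q) * (1 - b * q).
  apply: mulr_ge0; last by lra.
  apply: divr_ge0; [lra | nra].
have e2 : (q - b) / (b * q) * (1 - b * q) = (b^-1 + b) - (q^-1 + q).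
  by field; rewrite !gt_eqF.
rewrite e2 subr_ge0 //.
Qed.

Lemma two_le : 2 <= q^-1 + q.
Proof.
have e : q^-1 + q - 2 = (1 - q) ^+ 2 / q by field; rewrite gt_eqF.
have : 0 <= (1 - q) ^+ 2 / q by apply: divr_ge0; [apply: sqr_ge0 | exact: ltW].
by rewrite -e subr_ge0.
Qed.

Lemma mono n : (n.+2)%:R * qint q 2 <= 2 * qint q n.+2.
Proof.
suff H : forall n, (n.+2)%:R * qint q 2 <= 2 * qint q n.+2 /\
                   (n.+3)%:R * qint q 2 <= 2 * qint q n.+3 by case: (H n).
elim=> [|k [IH1 IH2]].
  split; first by rewrite mulrC.
  rewrite (qintSS 1) qint1 qint2 !expr2.
  have p1 : q^-1 * q = 1 by rewrite mulVf // gt_eqF.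
  have t := two_le.
  set p := q^-1 in p1 t *.
  have : 0 <= (2 * (p + q) + 1) * ((p + q) - 2) by apply: mulr_ge0; lra.
  rewrite invrM ?unitfE ?gt_eqF // -/p.
  nra.
split => //.
rewrite (qintSS k.+2) mulrDr.
have -> : (k.+4)%:R = (k.+2)%:R + 2 :> R by rewrite -natrD addn2.
rewrite mulrDl qint2.
have := a_ge (j:=k.+3) isT.
rewrite -qint2. lra.
Qed.

Lemma qint2_ge2 : 2 <= qint q 2.
Proof. by rewrite qint2 two_le. Qed.

Lemma qdim_ge m : (m.+1)%:R <= qdim q m.
Proof.
rewrite /qdim; case: m => [|m]; first by rewrite qint1.
have := mono m; have := qint2_ge2.
have : 0 <= (m.+2)%:R :> R by [].
nra.
Qed.

Lemma qdim_gt0 m : 0 < qdim q m.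
Proof. apply: lt_le_trans (qdim_ge m); by []. Qed.

End Q.
Lemma NfusE k a b : Nfus k a b =
  [&& (a <= k + b)%N, (b <= k + a)%N, (k <= a + b)%N & ~~ odd (k + a + b)].
Proof.
rewrite /Nfus.
have -> : (`|a%:Z - b%:Z|%N <= k)%N = (a <= k + b)%N && (b <= k + a)%N.
  by apply/idP/andP; [move=> h; split; lia | case=> h1 h2; lia].
by rewrite -andbA.
Qed.

Lemma Nfus_sym k n m : Nfus k n m = Nfus n k m.
Proof.
rewrite !NfusE; congr (nat_of_bool _); apply/idP/idP => /and4P[h1 h2 h3 h4]; apply/and4P; split; lia.
Qed.

Lemma sum_eqc K c : (\sum_(n < K) (n == c :> nat))%N = (c < K)%N.
Proof.
elim: K => [|K IH]; first by rewrite big_ord0.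
rewrite big_ord_recr /= IH.
case: (ltngtP c K) => h; lia.
Qed.

Lemma count_Nfus k m K : (\sum_(n < K) Nfus k n m <= m.+1)%N.
Proof.
have H : forall n : 'I_K, (Nfus k n m <= \sum_(i < m.+1) (n == k + m - 2 * i :> nat))%N.
  move=> n; rewrite NfusE; case: and4P => //= -[h1 h2 h3 h4].
  have hi : ((k + m - n) %/ 2 < m.+1)%N by lia.
  rewrite (bigD1 (Ordinal hi)) //=.
  have -> : (n == k + m - 2 * ((k + m - n) %/ 2) :> nat)%N by apply/eqP; lia.
  by [].
apply: (@leq_trans (\sum_(n < K) \sum_(i < m.+1) (n == k + m - 2 * i :> nat))%N).
  by apply: leq_sum => n _; exact: H n.
rewrite exchange_big /=.
apply: (@leq_trans (\sum_(i < m.+1) 1)%N); last by rewrite sum1_card card_ord.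
apply: leq_sum => i _.
by rewrite sum_eqc; case: (_ < _)%N.
Qed.
Section CS.
Variable R : realType.

Lemma sumsum_mul (K : nat) (f g : 'I_K -> R) :
  \sum_(i < K) \sum_(j < K) f i * g j = (\sum_(i < K) f i) * (\sum_(j < K) g j).
Proof. by rewrite mulr_suml; apply: eq_bigr => i _; rewrite mulr_sumr. Qed.

Lemma CS (K : nat) (w x : 'I_K -> R) : (forall i, 0 <= w i) ->
  (\sum_(i < K) w i * x i) ^+ 2 <=
  (\sum_(i < K) w i) * (\sum_(i < K) w i * x i ^+ 2).
Proof.
move=> w0.
set A := \sum_(i < K) w i; set B := \sum_(i < K) w i * x i;
  set C := \sum_(i < K) w i * x i ^+ 2.
have H : 0 <= \sum_(i < K) \sum_(j < K) w i * w j * (x i - x j) ^+ 2.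
  apply: sumr_ge0 => i _; apply: sumr_ge0 => j _.
  by apply: mulr_ge0; [apply: mulr_ge0 | apply: sqr_ge0].
have E : \sum_(i < K) \sum_(j < K) w i * w j * (x i - x j) ^+ 2 =
   (\sum_(i < K) \sum_(j < K) (w i * x i ^+ 2) * w j)
 + (\sum_(i < K) \sum_(j < K) w i * (w j * x j ^+ 2))
 - 2 * (\sum_(i < K) \sum_(j < K) (w i * x i) * (w j * x j)).
  rewrite mulr_sumr -big_split -sumrB /=; apply: eq_bigr => i _.
  rewrite mulr_sumr -big_split -sumrB /=; apply: eq_bigr => j _.
  ring.
rewrite E !sumsum_mul -/A -/B -/C in H.
rewrite expr2; lra.
Qed.

End CS.
Section Schur.
Variable R : realType.

Lemma sum_widen (F : nat -> R) n1 n2 : (n1 <= n2)%N -> (forall i, 0 <= F i) ->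
  \sum_(i < n1) F i <= \sum_(i < n2) F i.
Proof.
move=> h F0; rewrite -!(big_mkord xpredT F) (big_cat_nat _ h) //= lerDl.
by apply: sumr_ge0 => i _.
Qed.

Lemma wsum_le k m K : \sum_(n < K) (Nfus k n m)%:R <= (m.+1)%:R :> R.
Proof. by rewrite -natr_sum ler_nat count_Nfus. Qed.

Lemma schur (x : nat -> R) m N :
  \sum_(k < N) (\sum_(n < (k + m).+1) (Nfus k n m)%:R * x n) ^+ 2 <=
  (m.+1)%:R ^+ 2 * \sum_(n < N + m) x n ^+ 2.
Proof.
have S1 : forall k : 'I_N,
  (\sum_(n < (k + m).+1) (Nfus k n m)%:R * x n) ^+ 2 <=
  (m.+1)%:R * \sum_(n < N + m) (Nfus k n m)%:R * x n ^+ 2.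
  move=> k.
  have := @CS R (k + m).+1 (fun n => (Nfus k n m)%:R) (fun n => x n) (fun i => ler0n _ _).
  move=> /le_trans; apply.
  apply: ler_pM.
  - by apply: sumr_ge0.
  - by apply: sumr_ge0 => i _; apply: mulr_ge0 => //; apply: sqr_ge0.
  - exact: wsum_le.
  - apply: (sum_widen (F:=fun n => (Nfus k n m)%:R * x n ^+ 2)).
      by have := ltn_ord k; lia.
    by move=> i; apply: mulr_ge0 => //; apply: sqr_ge0.
apply: le_trans; first by apply: (ler_sum _ (fun k _ => S1 k)).
rewrite -mulr_sumr exprS -mulrA; apply: ler_wpM2l => //.
rewrite exchange_big mulr_sumr /=; apply: ler_sum => n _.
rewrite -mulr_suml; apply: ler_wpM2r; first by apply: sqr_ge0.
under eq_bigr do rewrite Nfus_sym.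
exact: wsum_le.
Qed.

End Schur.
Section Lower.
Variable R : realType.
Local Open Scope ereal_scope.

Lemma modsq_ge0 (z : R * R) : (0 <= modsq z)%R.
Proof. by rewrite /modsq addr_ge0 // sqr_ge0. Qed.

Lemma psum_le (f : cvec R) N :
  (\sum_(k < N) modsq (f k))%:E <= normsq f.
Proof.
rewrite -sumEFin /normsq.
have := @nneseries_lim_ge R (fun k => (modsq (f k))%:E) xpredT 0%N N.
rewrite big_mkord; apply => n _ _; by rewrite lee_fin modsq_ge0.
Qed.

Lemma series_le (f : cvec R) (C : R) :
  (forall N, (\sum_(k < N) modsq (f k) <= C)%R) -> normsq f <= C%:E.
Proof.
move=> H; rewrite /normsq; apply: lime_le.
  by apply: is_cvg_nneseries => n _ _; rewrite lee_fin modsq_ge0.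
apply: nearW => N; rewrite big_mkord sumEFin lee_fin; exact: H.
Qed.

End Lower.
Section Lower2.
Variable R : realType.
Local Open Scope ereal_scope.

Lemma pt_real (M d x x' y y' : R) : (0 <= d)%R ->
  (M * d * (d - M) * (x ^+ 2 + x' ^+ 2) - (d - M) * (y ^+ 2 + y' ^+ 2)
   <= M * ((y - d * x) ^+ 2 + (y' - d * x') ^+ 2))%R.
Proof.
move=> d0.
have : (0 <= d * ((y - M * x) ^+ 2 + (y' - M * x') ^+ 2))%R.
  by apply: mulr_ge0 => //; apply: addr_ge0; apply: sqr_ge0.
move=> hh; nra.
Qed.

Lemma lower_normsq (xi : cvec R) m (d : R) : normsq xi = 1 -> ((m.+1)%:R < d)%R ->
  ((d - (m.+1)%:R) ^+ 2)%:E <= normsq (subscal (rho m xi) xi d).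
Proof.
move=> Hxi Hd.
set M := (m.+1)%:R : R.
have M0 : (0 < M)%R by rewrite /M ltr0Sn.
set eta := rho m xi; set v := subscal eta xi d.
have PB : forall N, (\sum_(k < N) modsq (eta k) <= M ^+ 2)%R.
  move=> N.
  have h1 := schur (fun n => (xi n).1) m N.
  have h2 := schur (fun n => (xi n).2) m N.
  have := psum_le xi (N + m); rewrite Hxi lee_fin /modsq big_split /= => h.
  rewrite /modsq big_split /=.
  have M2 : (0 <= M ^+ 2)%R by apply: sqr_ge0.
  rewrite -/M in h1 h2.
  apply: le_trans; first exact: lerD h1 h2.
  have := ler_wpM2l M2 h; rewrite mulr1 mulrDr; apply: le_trans. exact: lexx.
have pt : forall k, (M * d * (d - M) * modsq (xi k) - (d - M) * modsq (eta k)
                      <= M * modsq (v k))%R.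
  move=> k; rewrite /v /subscal /modsq /=; apply: pt_real; lra.
have PC : forall N, (d * (d - M) * \sum_(k < N) modsq (xi k) - (d - M) * M
                     <= \sum_(k < N) modsq (v k))%R.
  move=> N.
  have h : (M * d * (d - M) * \sum_(k < N) modsq (xi k)
            - (d - M) * \sum_(k < N) modsq (eta k) <= M * \sum_(k < N) modsq (v k))%R.
    rewrite !mulr_sumr -sumrB. apply: ler_sum => k _; exact: pt.
  have := PB N.
  set X := (\sum_(k < N) modsq (xi k))%R in h *; set E := (\sum_(k < N) modsq (eta k))%R in h *;
  set V := (\sum_(k < N) modsq (v k))%R in h *.
  move=> hE.
  have h3 : ((d - M) * E <= (d - M) * M ^+ 2)%R by apply: ler_wpM2l; lra.
  rewrite -(ler_pM2l M0); nra.
case E: (normsq v) => [r| |].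
- have HX : forall N, (\sum_(k < N) modsq (xi k) <= (r + (d - M) * M) / (d * (d - M)))%R.
    move=> N; have := PC N; have := psum_le v N; rewrite E lee_fin => h1 h2.
    have dM : (0 < d * (d - M))%R by apply: mulr_gt0; lra.
    rewrite ler_pdivlMr //; lra.
  have := series_le HX; rewrite Hxi lee_fin => h.
  have dM : (0 < d * (d - M))%R by apply: mulr_gt0; lra.
  move: h; rewrite ler_pdivlMr // mul1r lee_fin => h.
  nra.
- by rewrite leey.
- by have := psum_le v 0; rewrite E big_ord0.
Qed.

End Lower2.
Section KazLower.
Variable R : realType.
Variable q : R.
Hypothesis hq0 : (0 < q)%R.
Hypothesis hq1 : (q <= 1)%R.
Local Open Scope ereal_scope.

Lemma normsq_ge0 (f : cvec R) : 0 <= normsq f.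
Proof. by have := psum_le f 0; rewrite big_ord0. Qed.

Lemma l2norm_ge0 (f : cvec R) : 0 <= l2norm f.
Proof. by rewrite /l2norm; case: pselect => _ //; rewrite lee_fin sqrtr_ge0. Qed.

Lemma kaz_term_ge (xi : cvec R) m : normsq xi = 1 ->
  (1 - (m.+1)%:R / qdim q m)%:E <=
  l2norm (subscal (rho m xi) xi (qdim q m)) * ((qdim q m)^-1)%:E.
Proof.
move=> Hxi.
set d := qdim q m; set M := (m.+1)%:R : R.
have d0 : (0 < d)%R by apply: qdim_gt0.
have dM : (M <= d)%R by apply: qdim_ge.
have di0 : (0 < d^-1)%R by rewrite invr_gt0.
move: dM; rewrite le_eqVlt => /orP[/eqP eMd|ltMd].
  rewrite eMd divff ?gt_eqF // subrr; apply: mule_ge0; first exact: l2norm_ge0.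
  by rewrite lee_fin ltW.
rewrite /l2norm; case: pselect => [Hl|_]; last first.
  by rewrite mulyr gtr0_sg // mul1e leey.
have h := lower_normsq Hxi ltMd; rewrite -/M -/d in h.
have := normsq_ge0 (subscal (rho m xi) xi d); move/gee0P => [Hy|[r r0 Er]].
  by move: Hl; rewrite /l2 Hy ltxx.
rewrite Er /= -EFinM lee_fin.
rewrite Er lee_fin in h.
have hs : (d - M <= Num.sqrt r)%R.
  rewrite -(ler_sqrt ((d - M) ^+ 2) r0) sqrtr_sqr in h.
  by apply: le_trans h; apply: ler_norm.
have -> : (1 - M / d = (d - M) * d^-1)%R by rewrite mulrBl divff ?gt_eqF.
by apply: ler_wpM2r => //; rewrite ltW.
Qed.

Lemma le_bigmaxe (F : nat -> \bar R) (X : seq nat) m y :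
  m \in X -> y <= F m -> y <= \big[maxe/0]_(i <- X) F i.
Proof.
elim: X => // a X IH; rewrite in_cons big_cons => /orP[/eqP<-|h] hy.
  by rewrite le_max hy.
by rewrite le_max (IH h hy) orbT.
Qed.

Lemma prodcoef0 (w : seq nat) k : all (fun m => m == 0%N) w -> prodcoef w k = (k == 0%N).
Proof.
elim: w k => [|a w IH] k //= /andP[/eqP -> hw].
rewrite big_ord_recl (IH _ hw) /= muln1.
rewrite big1 => [|i _]; last by rewrite (IH _ hw) /= muln0.
rewrite addn0 NfusE; case: k => [|k] //=; apply/negbTE; apply/and4P; case; lia.
Qed.

Lemma gen_has (X : seq nat) : fin_gen_set X -> exists2 m, m \in X & (0 < m)%N.
Proof.
move=> H; case: (boolP (has (fun m => 0 < m)%N X)) => [/hasP[m h1 h2]|hn].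
  by exists m.
have [w [hw hc]] := H 1%N.
exfalso; move: hc; rewrite prodcoef0 //.
apply/allP => x hx; move: hw => /allP /(_ x hx) hxX.
apply/negPn/negP => hx0.
move/hasPn: hn => /(_ x hxX); by rewrite lt0n hx0.
Qed.

Lemma tau_le m : (0 < m)%N ->
  (1 - 2 / qint q 2 <= 1 - (m.+1)%:R / qdim q m)%R.
Proof.
case: m => [//|m] _.
have D0 : (0 < qint q 2)%R by apply: lt_le_trans (qint2_ge2 hq0 hq1).
have d0 : (0 < qdim q m.+1)%R by apply: qdim_gt0.
rewrite lerD2l lerN2 ler_pdivrMr // mulrAC ler_pdivlMr //.
by rewrite /qdim; apply: mono.
Qed.

Lemma Kaz_lower : (1 - 2 / qint q 2)%:E <= Kaz_rho q.
Proof.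
apply/ereal_infP => _ [X HX <-].
apply/ereal_infP => _ [xi Hxi <-].
have [m mX m0] := gen_has HX.
apply: (le_bigmaxe (m := m)) => //.
apply: le_trans (kaz_term_ge m Hxi).
by rewrite lee_fin tau_le.
Qed.

End KazLower.
Section Upper1.
Variable R : realType.

Lemma Nfus1 k a b : (a <= k + b)%N -> (b <= k + a)%N -> (k <= a + b)%N ->
  ~~ odd (k + a + b) -> Nfus k a b = 1%N.
Proof. by move=> h1 h2 h3 h4; rewrite NfusE h1 h2 h3 h4. Qed.

Lemma Nfus0 k a b : ~~ [&& (a <= k + b)%N, (b <= k + a)%N, (k <= a + b)%N & ~~ odd (k + a + b)] ->
  Nfus k a b = 0%N.
Proof. by rewrite NfusE => /negbTE ->. Qed.

Lemma rho1_sum (x : nat -> R) k :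
  \sum_(n < (k + 1).+1) (Nfus k n 1)%:R * x n =
  (if k is k'.+1 then x k' else 0) + x k.+1.
Proof.
rewrite big_ord_recr /= !addn1.
have -> : (Nfus k k.+1 1)%:R = 1 :> R by rewrite Nfus1 //; lia.
rewrite mul1r; congr (_ + _).
case: k => [|k].
  rewrite big_ord_recr big_ord0 /= Nfus0 ?mul0r ?add0r //; apply/and4P; case; lia.
rewrite big_ord_recr /= (@Nfus0 k.+1 k.+1 1); last by apply/and4P; case; lia.
rewrite mul0r addr0 big_ord_recr /=.
have -> : (Nfus k.+1 k 1)%:R = 1 :> R by rewrite Nfus1 //; lia.
rewrite mul1r big1 ?add0r // => i _.
rewrite Nfus0 ?mul0r //; apply/and4P; case; have := ltn_ord i; lia.
Qed.

Local Open Scope ereal_scope.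

Lemma normsq_fin (f : cvec R) K : (forall k, (K <= k)%N -> modsq (f k) = 0%R) ->
  normsq f = (\sum_(k < K) modsq (f k))%:E.
Proof.
move=> H; rewrite /normsq (@nneseries_split R _ 0 K); last by move=> k _; rewrite lee_fin modsq_ge0.
rewrite add0n eseries0 ?adde0 ?big_mkord ?sumEFin //.
by move=> i hi _; rewrite H.
Qed.

Lemma prodcoef_nseq k : (0 < prodcoef (nseq k 1%N) k)%N.
Proof.
elim: k => [|k IH] //=.
have hk : (k < (k.+1 + 1).+1)%N by lia.
rewrite (bigD1 (Ordinal hk)) //= (@Nfus1 k.+1 1 k); try lia.
Qed.

Lemma gen1 : fin_gen_set [:: 1%N].
Proof.
move=> k; exists (nseq k 1%N); split.
  by elim: k => //= k ->; rewrite andbT inE.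
by rewrite -lt0n prodcoef_nseq.
Qed.

End Upper1.
Section Upper2.
Variable R : realType.
Variable q : R.

Definition cc (n : nat) : R := (Num.sqrt (n.+2)%:R)^-1.
Definition xf (n k : nat) : R := if (k < n.+2)%N then cc n else 0.
Definition xv (n : nat) : cvec R := fun k => (xf n k, 0).

Lemma cc2 n : cc n ^+ 2 = (n.+2)%:R^-1.
Proof. by rewrite /cc exprVn sqr_sqrtr ?ler0n. Qed.

Lemma xf_lt n k : (k < n.+2)%N -> xf n k = cc n.
Proof. by rewrite /xf => ->. Qed.
Lemma xf_ge n k : (n.+2 <= k)%N -> xf n k = 0.
Proof. by move=> h; rewrite /xf; case: ifP => // h'; exfalso; lia. Qed.

Lemma xv_norm n : normsq (xv n) = 1%E.
Proof.
rewrite (@normsq_fin _ _ n.+2); last first.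
  by move=> k hk; rewrite /modsq /xv /= xf_ge // !expr2 !mul0r addr0.
congr (_%:E).
rewrite (eq_bigr (fun _ => cc n ^+ 2)); last first.
  by move=> k _; rewrite /modsq /xv /= xf_lt // [0 ^+ 2]expr2 mul0r addr0.
rewrite sumr_const card_ord cc2; set a := (n.+2)%:R : R.
by rewrite -mulr_natr -/a mulVf // /a pnatr_eq0.
Qed.

Definition vv (n : nat) : cvec R := subscal (rho 1 (xv n)) (xv n) (qdim q 1).

Lemma vv_val n k : modsq (vv n k) =
  ((if k is k'.+1 then xf n k' else 0) + xf n k.+1 - qint q 2 * xf n k) ^+ 2.
Proof.
rewrite /vv /subscal /rho (rho1_sum (fun j => (xv n j).1)) (rho1_sum (fun j => (xv n j).2)).
rewrite /modsq /xv /= /qdim.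
have -> : (if k is k'.+1 then 0 else 0) = 0 :> R by case: k.
by rewrite addr0 mulr0 subr0 [0 ^+ 2]expr2 mul0r addr0.
Qed.

End Upper2.
Section Upper3.
Variable R : realType.
Variable q : R.

Lemma vv_sum n : \sum_(k < n.+3) modsq (vv q n k) =
  cc R n ^+ 2 * (2 * (1 - qint q 2) ^+ 2 + 1 + n%:R * (2 - qint q 2) ^+ 2).
Proof.
rewrite big_ord_recr big_ord_recr big_ord_recl /=.
rewrite (eq_bigr (fun _ => (cc R n * (2 - qint q 2)) ^+ 2)); last first.
  move=> i _; rewrite vv_val /bump /= add1n.
  rewrite !xf_lt; try (have := ltn_ord i; lia).
  by congr (_ ^+ 2); ring.
rewrite sumr_const card_ord !vv_val /=.
rewrite (@xf_lt R n 1) // (@xf_lt R n 0) // (@xf_lt R n n) // (@xf_lt R n n.+1) //.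
rewrite (@xf_ge R n n.+2) // (@xf_ge R n n.+3) //.
rewrite -mulr_natr; ring.
Qed.
End Upper3.
Section Final.
Variable R : realType.
Variable q : R.
Hypothesis hq0 : (0 < q)%R.
Hypothesis hq1 : (q <= 1)%R.
Local Open Scope ereal_scope.

Lemma vv_norm n : normsq (vv q n) = (\sum_(k < n.+3) modsq (vv q n k))%:E.
Proof.
apply: normsq_fin => k hk; rewrite vv_val.
case: k hk => [//|k] hk.
by rewrite !xf_ge //; try lia; rewrite addr0 mulr0 subr0 expr2 mulr0.
Qed.

Lemma kaz_upper (e : R) : (0 < e)%R -> exists n,
  kaz_val q [:: 1%N] (xv R n) <= (1 - 2 / qint q 2 + e)%:E.
Proof.
move=> e0.
set D := qint q 2.
have D2 : (2 <= D)%R by apply: qint2_ge2.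
have D0 : (0 < D)%R by apply: lt_le_trans D2.
set C : R := (2 * (1 - D) ^+ 2 + 1)%R.
set de : R := ((e * D) ^+ 2)%R.
have de0 : (0 < de)%R by rewrite /de exprn_gt0 // mulr_gt0.
exists (Num.trunc (C / de)).
set n := Num.trunc (C / de).
have hn : (C / de < n.+1%:R)%R by apply: truncnS_gt.
have hC : (C <= de * n.+2%:R)%R.
  rewrite ltr_pdivrMr // in hn.
  apply: le_trans (ltW hn) _; rewrite mulrC ler_pM2l // ler_nat; lia.
rewrite /kaz_val big_cons big_nil.
have tau0 : (0 <= 1 - 2 / D)%R.
  by rewrite subr_ge0 ler_pdivrMr // mul1r.
rewrite ge_max; apply/andP; split; last first.
  have t0 : (0 <= 1 - 2 / D + e)%R by apply: addr_ge0 => //; exact: ltW.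
  first [ by rewrite lee_fin | exact: t0 | by apply: (le_trans (lexx _)); rewrite lee_fin | idtac "FAIL"; by [] ].

change (subscal (rho 1 (xv R n)) (xv R n) (qdim q 1)) with (vv q n).
rewrite /l2norm; case: pselect => [_|Hn]; last first.
  by exfalso; apply: Hn; rewrite /l2 vv_norm ltry.
rewrite vv_norm /= -EFinM lee_fin vv_sum.
rewrite /qdim -/D.
set S := (cc R n ^+ 2 * _)%R.
set Z : R := (D - 2 + e * D)%R.
have Z0 : (0 <= Z)%R by rewrite /Z addr_ge0 ?subr_ge0 // mulr_ge0 // ltW.
have hS : (S <= Z ^+ 2)%R.
  have nn : (0 < n.+2%:R :> R)%R by [].
  rewrite -(ler_pM2r nn) /S mulrAC cc2 mulVf ?gt_eqF // mul1r.
  have hn2 : ((n%:R : R) <= n.+2%:R)%R by rewrite ler_nat; lia.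
  have h2 : (0 <= (2 - D) ^+ 2)%R by apply: sqr_ge0.
  rewrite /Z -/C. rewrite /de in hC.
  have hx : (0 <= 2 * (D - 2) * (e * D))%R by apply: mulr_ge0; [apply: mulr_ge0 => //; lra | apply: mulr_ge0; lra].
  nra.
have hs : (Num.sqrt S <= Z)%R.
  by move: hS; rewrite -(ler_sqrt S (sqr_ge0 Z)) sqrtr_sqr ger0_norm.
apply: le_trans (_ : (Z * D^-1 <= _)%R).
  by apply: ler_wpM2r => //; rewrite invr_ge0 ltW.
rewrite /Z mulrDl mulrBl divff ?gt_eqF // -mulrA divff ?gt_eqF // mulr1.
exact: lexx.
Qed.

Lemma Kaz_upper : Kaz_rho q <= (1 - 2 / qint q 2)%:E.
Proof.
apply/lee_addgt0Pr => e e0; rewrite -EFinD.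
have [n hn] := kaz_upper e0.
apply: le_trans (_ : KazX q [:: 1%N] <= _).
  by apply: ereal_inf_lbound; exists [:: 1%N] => //; exact: gen1.
apply: le_trans hn.
apply: ereal_inf_lbound; exists (xv R n) => //; exact: xv_norm.
Qed.

End Final.

Unset Implicit Arguments.

Theorem proposition4p6 (R : realType) (q : R) (hq0 : 0 < q) (hq1 : q <= 1) :
  Kaz_rho q = (1 - 2 / qint q 2)%:E /\
  Kaz_rho q = ((1 - q) ^+ 2 / (q ^+ 2 + 1))%:E.
Proof.
have E : Kaz_rho q = (1 - 2 / qint q 2)%:E.
  by apply/eqP; rewrite eq_le (Kaz_upper hq0 hq1) (Kaz_lower hq0 hq1).
split => //; rewrite E (qint2 hq0 hq1); f_equal.
have q0 : q != 0 by rewrite gt_eqF.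
have q2 : q ^+ 2 + 1 != 0 by rewrite gt_eqF //; apply: addr_gt0 => //; exact: exprn_gt0.
field.
by rewrite q2 q0.
Qed.
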